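(* Let $\Sigma\in\mathcal{G}_n$, $W=W(\Sigma)$, and let $Q_0$ be the unique regular rational orthogonal matrix with $Q_0^{\rm T}S(\Sigma)Q_0=S(\Sigma^{\rm T})$, with level $\ell_0$. Let $p$ be an odd prime with $p\nmid\ell_0$. If $z$ is an integral vector with $z\not\equiv0\pmod p$ and $W^{\rm T}z\equiv0\pmod p$, then $z^{\rm T}z\not\equiv0\pmod p$.
   Context: An oriented graph on vertices $v_1,\dots,v_n$ is a simple graph with each edge directed; its skew-adjacency matrix $S(\Sigma)=(s_{ij})$ has $s_{ij}=1$ if $(v_i,v_j)$ is an arc, $-1$ if $(v_j,v_i)$ is an arc, $0$ otherwise. The converse $\Sigma^{\rm T}$ reverses every arc, so $S(\Sigma^{\rm T})=-S(\Sigma)$. With $e$ the all-one vector, $W(\Sigma)=[e,Se,\dots,S^{n-1}e]$, $S=S(\Sigma)$. $\mathcal{G}_n$ is the set of $n$-vertex oriented graphs with $2^{-\lfloor n/2\rfloor}\det W(\Sigma)$ an odd square-free integer. A rational orthogonal matrix $Q$ is regular if $Qe=e$; its level is the least positive integer $k$ with $kQ$ integral. Since $\det W(\Sigma)\ne0$, $Q_0$ exists and is unique. *)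

(* Defs.v *)
From mathcomp Require Import all_boot all_order all_algebra.
Set Implicit Arguments. Unset Strict Implicit. Unset Printing Implicit Defensive.
Import Order.TTheory GRing.Theory Num.Theory.
Local Open Scope ring_scope.

(* An oriented graph on vertices 'I_n is given by its arc relation [arc]:
   [arc i j] means (v_i, v_j) is an arc. Simple + oriented: no loops and
   at most one direction per pair. *)
Definition oriented_graph (n : nat) (arc : rel 'I_n) : Prop :=
  forall i j, ~~ (arc i j && arc j i).

Definition skewadj (n : nat) (arc : rel 'I_n) : 'M[int]_n :=
  \matrix_(i, j) ((arc i j)%:Z - (arc j i)%:Z).

Definition onev (R : nzRingType) (n : nat) : 'cV[R]_n := const_mx 1.

Definition walkmx (n : nat) (S : 'M[int]_n) : 'M[int]_n :=
  \matrix_(i, k) ((S ^+ k) *m onev int n) i 0.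

Definition squarefree_nat (m : nat) : bool :=
  [forall p : 'I_m.+1, prime p ==> ~~ (p ^ 2 %| m)%N].

Definition in_Gn (n : nat) (arc : rel 'I_n) : Prop :=
  exists m : int,
    \det (walkmx (skewadj arc)) = (2 ^+ n./2) * m /\ odd `|m|%N /\ squarefree_nat `|m|%N.

Definition ratmx (n : nat) (A : 'M[int]_n) : 'M[rat]_n := map_mx (fun x => x%:~R) A.

Definition orthogonal_mx (n : nat) (Q : 'M[rat]_n) : Prop := Q^T *m Q = 1%:M.
Definition regular_mx (n : nat) (Q : 'M[rat]_n) : Prop := Q *m onev rat n = onev rat n.

Definition integral_mx (n : nat) (A : 'M[rat]_n) : Prop :=
  forall i j, A i j \is a Num.int.

Definition is_level (n : nat) (Q : 'M[rat]_n) (l : nat) : Prop :=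
  (0 < l)%N /\ integral_mx (l%:R *: Q) /\
  forall k : nat, (0 < k)%N -> integral_mx (k%:R *: Q) -> (l <= k)%N.

(* Main.v *)
Require Import Defs.
From mathcomp Require Import all_boot all_order all_algebra.
From mathcomp Require Import zify ring lra.
Set Implicit Arguments. Unset Strict Implicit. Unset Printing Implicit Defensive.
Import Order.TTheory GRing.Theory Num.Theory.
Local Open Scope ring_scope.

Definition imx (R : nzRingType) n m (A : 'M[int]_(n, m)) : 'M[R]_(n, m) :=
  map_mx (fun x : int => x%:~R) A.

Lemma imxM (R : nzRingType) n m k (A : 'M[int]_(n, m)) (B : 'M[int]_(m, k)) :
  imx R (A *m B) = imx R A *m imx R B.
Proof. by rewrite /imx map_mxM. Qed.
Lemma imxD (R : nzRingType) n m (A B : 'M[int]_(n, m)) : imx R (A + B) = imx R A + imx R B.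
Proof. by rewrite /imx map_mxD. Qed.
Lemma imxN (R : nzRingType) n m (A : 'M[int]_(n, m)) : imx R (- A) = - imx R A.
Proof. by rewrite /imx map_mxN. Qed.
Lemma imx_tr (R : nzRingType) n m (A : 'M[int]_(n, m)) : imx R A^T = (imx R A)^T.
Proof. by rewrite /imx map_trmx. Qed.
Lemma imxZ (R : nzRingType) n m c (A : 'M[int]_(n, m)) : imx R (c *: A) = c%:~R *: imx R A.
Proof. by apply/matrixP => i j; rewrite !mxE rmorphM. Qed.
Lemma imx1 (R : nzRingType) n : imx R (1%:M : 'M[int]_n) = 1%:M.
Proof. by rewrite /imx map_mx1. Qed.
Lemma imxX (R : nzRingType) n (A : 'M[int]_n) k : imx R (A ^+ k) = imx R A ^+ k.
Proof.
elim: k => [|k IH]; first by rewrite !expr0 imx1.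
by rewrite !exprS -!mulmxE imxM IH.
Qed.
Lemma imx_adj (R : comNzRingType) n (A : 'M[int]_n) : imx R (\adj A) = \adj (imx R A).
Proof. by rewrite /imx map_mx_adj. Qed.
Lemma imx_det (R : comNzRingType) n (A : 'M[int]_n) : (\det A)%:~R = \det (imx R A).
Proof. by rewrite /imx det_map_mx. Qed.

Definition kry (F : fieldType) n (S : 'M[F]_n) (e : 'cV[F]_n) (j : nat) : 'M[F]_(j, n) :=
  \matrix_(k < j, i < n) (S ^+ k *m e) i 0.
Definition vk (F : fieldType) n (S : 'M[F]_n) (e : 'cV[F]_n) (k : nat) : 'rV[F]_n :=
  (S ^+ k *m e)^T.

Lemma row_kry (F : fieldType) n (S : 'M[F]_n) e j (k : 'I_j) :
  row k (kry S e j) = vk S e k.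
Proof. by apply/rowP => i; rewrite !mxE. Qed.

Lemma vk_sub (F : fieldType) n (S : 'M[F]_n) e j k : (k < j)%N -> (vk S e k <= kry S e j)%MS.
Proof. by move=> hk; rewrite -(row_kry S e (Ordinal hk)) row_sub. Qed.

Lemma vkS (F : fieldType) n (S : 'M[F]_n) e k : vk S e k *m S^T = vk S e k.+1.
Proof. by rewrite /vk -trmx_mul mulmxA -[S *m _]/(S * _) -exprS. Qed.

Lemma kry_shift (F : fieldType) n (S : 'M[F]_n) e j :
  (kry S e j *m S^T <= kry S e j.+1)%MS.
Proof.
apply/row_subP => k; rewrite row_mul row_kry vkS; apply: vk_sub; exact: (ltn_ord k).
Qed.

Lemma kry_mono (F : fieldType) n (S : 'M[F]_n) e j :
  (kry S e j <= kry S e j.+1)%MS.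
Proof. apply/row_subP => k; rewrite row_kry; apply: vk_sub; exact: leqW (ltn_ord k). Qed.

Lemma kry_rank_step (F : fieldType) n (S : 'M[F]_n) e j :
  (\rank (kry S e j.+1) <= (\rank (kry S e j)).+1)%N.
Proof.
have: (kry S e j.+1 <= kry S e j + vk S e j)%MS.
  apply/row_subP => k; rewrite row_kry.
  case: (ltnP k j) => hk.
    by apply: submx_trans (addsmxSl _ _); exact: vk_sub.
  have ->: (k : nat) = j by apply/eqP; rewrite eqn_leq hk -ltnS ltn_ord.
  exact: addsmxSr.
move/mxrankS => h; apply: leq_trans h _.
apply: leq_trans (mxrank_adds_leqif _ _).1 _.
by have := rank_leq_row (vk S e j); lia.
Qed.

Lemma kry_stall (F : fieldType) n (S : 'M[F]_n) e j :
  \rank (kry S e j.+1) = \rank (kry S e j) -> forall t, (vk S e (j + t) <= kry S e j)%MS.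
Proof.
move=> h.
have e1: (kry S e j.+1 <= kry S e j)%MS.
  by rewrite -(mxrank_leqif_sup (kry_mono S e j)).2 h.
elim=> [|t IH].
  by rewrite addn0; exact: submx_trans (vk_sub S e (ltnSn j)) e1.
rewrite addnS -vkS; apply: submx_trans (submxMr _ IH) _.
exact: submx_trans (kry_shift S e j) e1.
Qed.

Lemma kry_all (F : fieldType) n (S : 'M[F]_n) e j N :
  \rank (kry S e j.+1) = \rank (kry S e j) -> (kry S e N <= kry S e j)%MS.
Proof.
move=> h; apply/row_subP => k; rewrite row_kry.
case: (ltnP k j) => hk; first exact: vk_sub.
rewrite -(subnKC hk); exact: kry_stall.
Qed.

Lemma kry_rank (F : fieldType) n (S : 'M[F]_n) e m :
  \rank (kry S e m.+1) = m -> \rank (kry S e m) = m.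
Proof.
move=> hm.
suff: forall j, (j <= m)%N -> \rank (kry S e j) = j by apply.
elim=> [|j IH] hj.
  by apply/eqP; rewrite -leqn0; exact: rank_leq_row.
have IHj := IH (ltnW hj).
have h1 := kry_rank_step S e j.
have h2 := mxrankS (kry_mono S e j).
rewrite IHj in h1 h2.
have [//|hr] : \rank (kry S e j.+1) = j.+1 \/ \rank (kry S e j.+1) = j by lia.
have := mxrankS (kry_all m.+1 (etrans hr (esym IHj))).
rewrite hm IHj => h; lia.
Qed.

Definition wmx (F : fieldType) n (S : 'M[F]_n) (e : 'cV[F]_n) : 'M[F]_n :=
  \matrix_(i, k) (S ^+ k *m e) i 0.

Lemma wmx_tr (F : fieldType) n (S : 'M[F]_n) e : (wmx S e)^T = kry S e n.
Proof. by apply/matrixP => i j; rewrite !mxE. Qed.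

Definition Dm (R : pzRingType) n : 'M[R]_n :=
  \matrix_(i, j) (if i == j then (-1) ^+ (i : nat) else 0).

Lemma row_Dm (R : pzRingType) n p (A : 'M[R]_(n, p)) i :
  row i (Dm R n *m A) = (-1) ^+ (i : nat) *: row i A.
Proof.
apply/rowP => j; rewrite !mxE (bigD1 i) //= big1 ?addr0.
  by rewrite !mxE eqxx.
by move=> k hk; rewrite !mxE eq_sym (negbTE hk) mul0r.
Qed.

Lemma final (F : fieldType) n (S : 'M[F]_n) e m (a : 'rV[F]_m) :
  (2:F) != 0 -> row_free (kry S e m) ->
  (forall k : 'I_m, a 0 k * (-1) ^+ (k : nat) = (-1) ^+ m * a 0 k) ->
  \sum_(k < m) a 0 k *: vk S e k.+1 = 0 -> a = 0.
Proof.
case: m a => [|m] a h2 fr hc hs; first by apply/rowP => [[]].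
have am : a 0 ord_max = 0.
  have := hc ord_max; rewrite /= exprS => h.
  have h' : forall x s : F, 2 * s * x = x * s - (-1) * s * x by move=> x s; ring.
  move: (h' (a 0 ord_max) ((-1) ^+ m)); rewrite h subrr => /eqP; rewrite !mulf_eq0 (negbTE h2) signr_eq0 /= => /eqP //.
rewrite big_ord_recr /= am scale0r addr0 in hs.
set b : 'rV_m.+1 := \row_(k < m.+1) (if (k : nat) is k'.+1 then a 0 (inord k') else 0).
have hb : b *m kry S e m.+1 = 0.
  rewrite mulmx_sum_row big_ord_recl mxE /= scale0r add0r -[X in _ = X]hs.
  apply: eq_bigr => k _; rewrite row_kry mxE /=.
  congr (_ *: _); congr (a 0 _); apply: val_inj; rewrite /= inordK //.
  exact: leqW (ltn_ord k).
have b0 : b = 0 by apply: (row_free_inj fr); rewrite hb mul0mx.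
apply/rowP => k; rewrite mxE.
case: (ltnP k m) => hk.
  have := congr1 (fun r : 'rV_m.+1 => r 0 (lift ord0 (Ordinal hk))) b0.
  rewrite !mxE /= => <-; congr (a 0 _); apply: val_inj; rewrite /= inordK //; exact: ltnW.
have -> : k = ord_max by apply: val_inj; apply/eqP; rewrite eqn_leq hk -ltnS ltn_ord.
exact: am.
Qed.

Lemma core (F : fieldType) m (S Q : 'M[F]_m.+1) (e z : 'cV[F]_m.+1) :
  S^T = - S -> (2 : F) != 0 ->
  (m <= \rank (wmx S e))%N ->
  z != 0 -> z^T *m wmx S e = 0 -> z^T *m z = 0 ->
  \adj (wmx S e) *m Q = Dm F m.+1 *m \adj (wmx S e) ->
  (wmx S e)^T *m Q = Dm F m.+1 *m (wmx S e)^T ->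
  S^T *m Q = - (Q *m S^T) -> False.
Proof.
move=> hS h2 hrk hz0 hzW hzz hadj hWQ hSQ.
set W := wmx S e in hrk hzW hadj hWQ.
set zr := z^T in hzW hzz.
have zr0 : zr != 0.
  by apply: contra hz0 => /eqP h; rewrite -[z]trmxK -/zr h trmx0.
have hker : (zr <= kermx W)%MS by apply/sub_kermxP.
have rW : \rank W = m.
  have := mxrankS hker; rewrite mxrank_ker rank_rV zr0 => h.
  apply/eqP; rewrite eqn_leq hrk andbT; lia.
have ker1 : forall y : 'rV_m.+1, y *m W = 0 -> exists mu, y = mu *: zr.
  move=> y hy.
  have hk : (kermx W <= zr)%MS.
    rewrite -(mxrank_leqif_sup hker).2 mxrank_ker rank_rV zr0 rW.
    by apply/eqP; lia.
  by apply/sub_rVP; apply: submx_trans hk; apply/sub_kermxP.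
set M := kry S e m.+1.
have hM : W^T = M by rewrite /W wmx_tr.
have hMz : M *m z = 0 by rewrite -hM -[z]trmxK -trmx_mul -/zr hzW trmx0.
have rM : \rank M = m by rewrite -hM mxrank_tr.
have zrM : (zr <= M)%MS.
  have hMk : (M <= kermx z)%MS by apply/sub_kermxP.
  have rk : \rank (kermx z) = m.
    by rewrite mxrank_ker -mxrank_tr -/zr rank_rV zr0 subn1.
  have : (kermx z <= M)%MS by rewrite -(mxrank_leqif_sup hMk).2 rM rk.
  by apply: submx_trans; apply/sub_kermxP.
set M' := kry S e m.
have rM' : \rank M' = m by apply: kry_rank.
have sM'M : (M' <= M)%MS := kry_mono S e m.
have sMM' : (M <= M')%MS by rewrite -(mxrank_leqif_sup sM'M).2 rM rM'.
have zrM' : (zr <= M')%MS := submx_trans zrM sMM'.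
have fM' : row_free M' by rewrite /row_free rM'.
have hM'z : M' *m z = 0 by case/submxP: sM'M => X ->; rewrite -mulmxA hMz mulmx0.
have vQ : forall k, (k < m.+1)%N -> vk S e k *m Q = (-1) ^+ k *: vk S e k.
  move=> k hk; have := congr1 (row (Ordinal hk)) hWQ.
  by rewrite row_mul row_Dm hM !row_kry.
have hdet : \det W = 0.
  apply/eqP; apply: contraT => hd.
  have : W \in unitmx by rewrite unitmxE unitfE.
  by move/mxrank_unit; rewrite rW => /eqP; lia.
have hzQ : zr *m Q = (-1) ^+ m *: zr.
  set y0 := row ord_max (\adj W).
  have hy0W : y0 *m W = 0.
    by rewrite -row_mul mul_adj_mx hdet; apply/rowP => j; rewrite !mxE mul0rn.
  have hy0Q : y0 *m Q = (-1) ^+ m *: y0 by rewrite -row_mul hadj row_Dm.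
  have y0nz : y0 != 0.
    apply/eqP => hy0.
    have [i0 hi0] : exists i0, z i0 0 != 0.
      case: (pickP (fun i => z i 0 != 0)) => [i0 hi0|h0]; first by exists i0.
      exfalso; move/eqP: hz0; apply; apply/matrixP => i j.
      by rewrite ord1 mxE; move: (h0 i) => /= /negbFE/eqP.
    set x : 'cV[F]_m.+1 := \col_i (i == i0)%:R.
    set B : 'M[F]_m.+1 := \matrix_(i, j) (if j == ord_max then x i 0 else W i j).
    have hB : \det B = 0.
      rewrite (expand_det_col _ ord_max).
      have : (y0 *m x) 0 0 = 0 by rewrite hy0 mul0mx mxE.
      rewrite !mxE => h; rewrite -[X in _ = X]h; apply: eq_bigr => i _.
      rewrite !mxE eqxx mulrC; congr (_ * _).
      rewrite /cofactor; congr (_ * _); congr (\det _).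
      by apply/matrixP => a b; rewrite !mxE [lift _ _ == _]eq_sym (negbTE (neq_lift _ _)).
    have hBt : (\rank B^T <= m)%N.
      have : B \notin unitmx by rewrite unitmxE hB unitr0.
      rewrite -row_free_unit /row_free mxrank_tr => h.
      have := rank_leq_row B; move: h; lia.
    have sM'B : (M' <= B^T)%MS.
      apply/row_subP => k; rewrite row_kry.
      have -> : vk S e k = row (widen_ord (leqnSn m) k) B^T.
        apply/rowP => j; rewrite !mxE.
        have -> : (widen_ord (leqnSn m) k == ord_max) = false.
          by apply/negbTE; rewrite -val_eqE /= neq_ltn ltn_ord.
        by [].
      exact: row_sub.
    have sBM' : (B^T <= M')%MS.
      have := mxrankS sM'B; rewrite rM' => h.
      by rewrite -(mxrank_leqif_sup sM'B).2 rM'; apply/eqP; lia.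
    have : (row ord_max B^T <= M')%MS := submx_trans (row_sub _ _) sBM'.
    case/submxP => a ha.
    have : (row ord_max B^T *m z) 0 0 = z i0 0.
      rewrite mxE (bigD1 i0) //= big1 ?addr0.
        by rewrite !mxE eqxx eqxx mul1r.
      by move=> j hj; rewrite !mxE eqxx (negbTE hj) mul0r.
    rewrite ha -mulmxA hM'z mulmx0 mxE => /esym/eqP.
    by rewrite (negbTE hi0).
  have [mu0 hmu0] := ker1 _ hy0W.
  have mu0nz : mu0 != 0.
    by apply: contra y0nz => /eqP h; rewrite hmu0 h scale0r.
  move: hy0Q; rewrite hmu0 -scalemxAl scalerA [_ * mu0]mulrC -scalerA.
  exact: (scalerI mu0nz).
have hMS : (M *m S^T <= M)%MS := submx_trans (submxMr _ sMM') (kry_shift S e m).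
set y := zr *m S^T.
have hyW : y *m W = 0.
  apply: trmx_inj; rewrite trmx0 !trmx_mul trmxK hM /zr trmxK.
  have -> : S = - S^T by rewrite hS opprK.
  case/submxP: hMS => X hX.
  by rewrite mulNmx mulmxN mulmxA hX -mulmxA hMz mulmx0 oppr0.
have [mu hmu] := ker1 _ hyW.
have hyQ : y *m Q = - ((-1) ^+ m *: y).
  by rewrite /y -mulmxA hSQ mulmxN mulmxA hzQ -scalemxAl.
have hy0 : y = 0.
  have h1 : y *m Q = (-1) ^+ m *: y.
    by rewrite hmu -scalemxAl hzQ !scalerA mulrC.
  have : ((-1) ^+ m *: y) *+ 2 = 0 by rewrite mulr2n -{1}h1 hyQ addNr.
  rewrite -scaler_nat scalerA => /eqP; rewrite scaler_eq0 mulf_eq0 signr_eq0 orbF.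
  by rewrite (negbTE h2) /= => /eqP.
case/submxP: zrM' => a ha.
have hcoef : forall k : 'I_m, a 0 k * (-1) ^+ (k : nat) = (-1) ^+ m * a 0 k.
  have e1 : zr *m Q = (\row_k (a 0 k * (-1) ^+ (k : nat))) *m M'.
    rewrite ha (mulmx_sum_row a M') (mulmx_sum_row _ M') mulmx_suml; apply: eq_bigr => k _.
    by rewrite row_kry -scalemxAl (vQ k (leqW (ltn_ord k))) scalerA mxE.
  have e2 : zr *m Q = ((-1) ^+ m *: a) *m M' by rewrite hzQ ha scalemxAl.
  move=> k; have := congr1 (fun r : 'rV_m => r 0 k) (row_free_inj fM' (etrans (esym e1) e2)).
  by rewrite !mxE.
have hy' : \sum_(k < m) a 0 k *: vk S e k.+1 = 0.
  rewrite -[X in _ = X]hy0 /y ha (mulmx_sum_row a M') mulmx_suml; apply: eq_bigr => k _.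
  by rewrite row_kry -scalemxAl vkS.
have a0 := final h2 fM' hcoef hy'.
by move: zr0; rewrite ha a0 mul0mx eqxx.
Qed.

Lemma imx_onev (R : nzRingType) n : imx R (onev int n) = onev R n.
Proof. by apply/matrixP => i j; rewrite !mxE. Qed.

Lemma imx_Dm (R : nzRingType) n : imx R (Dm int n) = Dm R n.
Proof.
apply/matrixP => i j; rewrite !mxE; case: eqP => _ /=; last by [].
by rewrite rmorphXn rmorphN1.
Qed.

Lemma imx_wmx (F : fieldType) n (S : 'M[int]_n) :
  imx F (walkmx S) = wmx (imx F S) (onev F n).
Proof.
apply/matrixP => i k; rewrite [RHS]mxE -imxX -(imx_onev F n) -imxM.
by rewrite /imx !mxE.
Qed.

Lemma Dm_tr (R : pzRingType) n : (Dm R n)^T = Dm R n.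
Proof. by apply/matrixP => i j; rewrite !mxE eq_sym; case: eqP => // ->. Qed.

Lemma Dm2 (R : pzRingType) n : Dm R n *m Dm R n = 1%:M.
Proof.
apply/matrixP => i j; rewrite !mxE (bigD1 i) //= big1 ?addr0.
  rewrite !mxE eqxx; have [_|hij] := eqVneq i j.
    by rewrite -exprD -signr_odd oddD addbb.
  by rewrite mulr0.
by move=> k hk; rewrite !mxE eq_sym (negbTE hk) mul0r.
Qed.

Lemma ratmx_inj n (A B : 'M[int]_n) : ratmx A = ratmx B -> A = B.
Proof.
move=> h; apply/matrixP => i j; have := congr1 (fun M : 'M[rat]_n => M i j) h.
by rewrite !mxE; apply: intr_inj.
Qed.

Lemma rat_facts n (S : 'M[int]_n) (Q0 : 'M[rat]_n) :
  Q0^T *m Q0 = 1%:M -> Q0 *m onev rat n = onev rat n ->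
  Q0^T *m ratmx S *m Q0 = ratmx (- S) ->
  ratmx S *m Q0 = - (Q0 *m ratmx S) /\
  Q0 *m wmx (ratmx S) (onev rat n) = wmx (ratmx S) (onev rat n) *m Dm rat n.
Proof.
move=> hort hreg hsk.
have hQQ : Q0 *m Q0^T = 1%:M by rewrite mulmx1C.
set Sr := ratmx S.
have h1 : Sr *m Q0 = - (Q0 *m Sr).
  have := congr1 (mulmx Q0) hsk; rewrite !mulmxA hQQ mul1mx => ->.
  by rewrite [ratmx _]imxN mulmxN.
have h1' : Q0 *m Sr = - (Sr *m Q0) by rewrite h1 opprK.
have h2 : forall k, Q0 *m Sr ^+ k = (-1) ^+ k *: (Sr ^+ k *m Q0).
  elim=> [|k IH]; first by rewrite !expr0 mulmx1 mul1mx scale1r.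
  rewrite exprSr -mulmxE mulmxA IH -scalemxAl -mulmxA h1' mulmxN mulmxA.
  by rewrite scalerN -scaleNr exprS mulN1r.
split => //.
apply/matrixP => i k; rewrite [RHS]mxE (bigD1 k) //= big1 => [|j hj]; last first.
  by rewrite !mxE (negbTE hj) mulr0.
rewrite !mxE eqxx addr0.
transitivity ((Q0 *m (Sr ^+ k *m onev rat n)) i 0).
  by rewrite !mxE; apply: eq_bigr => j _; rewrite !mxE.
by rewrite mulmxA h2 -scalemxAl -mulmxA hreg !mxE mulrC.
Qed.

Lemma transfer (F : fieldType) n (Q0 : 'M[rat]_n) (l : nat) (Qi A B C : 'M[int]_n) :
  ratmx Qi = l%:R *: Q0 -> (l%:R : F) != 0 ->
  ratmx A *m Q0 + Q0 *m ratmx B = ratmx C ->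
  imx F A *m ((l%:R)^-1 *: imx F Qi) + ((l%:R)^-1 *: imx F Qi) *m imx F B = imx F C.
Proof.
move=> hQ hl h.
have hi : A *m Qi + Qi *m B = l%:Z *: C.
  apply: ratmx_inj.
  change (imx rat (A *m Qi + Qi *m B) = imx rat (l%:Z *: C)).
  rewrite imxD !imxM imxZ.
  change (ratmx A *m ratmx Qi + ratmx Qi *m ratmx B = (l%:Z)%:~R *: ratmx C).
  by rewrite hQ -scalemxAr -scalemxAl -scalerDr h.
rewrite -scalemxAr -scalemxAl -scalerDr -!imxM -imxD hi imxZ scalerA.
by rewrite mulVf // scale1r.
Qed.

Lemma two_rows (p : nat) n (X : 'M[int]_n) (i1 i2 : 'I_n) : i1 != i2 ->
  (forall j, (p%:Z %| X i1 j)%Z) -> (forall j, (p%:Z %| X i2 j)%Z) ->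
  ((p%:Z) ^+ 2 %| \det X)%Z.
Proof.
move=> hne h1 h2.
pose P := fun i : 'I_n => (i == i1) || (i == i2).
pose d : 'rV[int]_n := \row_i (if P i then p%:Z else 1).
pose Y : 'M[int]_n := \matrix_(i, j) (if P i then (X i j %/ p%:Z)%Z else X i j).
have hX : X = diag_mx d *m Y.
  rewrite mul_diag_mx; apply/matrixP => i j; rewrite !mxE.
  case hP: (P i); last by rewrite mul1r.
  rewrite mulrC divzK //.
  by case/orP: hP => /eqP ->.
have hd : \det (diag_mx d) = p%:Z ^+ 2.
  rewrite det_diag (bigD1 i1) //= (bigD1 i2) /=; last by rewrite eq_sym hne.
  rewrite big1 => [|i /andP [hi1 hi2]].
    by rewrite !mxE /P !eqxx /= orbT mulr1 expr2.
  by rewrite mxE /P (negbTE hi1) (negbTE hi2).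
by rewrite hX det_mulmx hd dvdz_mulr.
Qed.

Lemma p2_det (p : nat) n (A : 'M[int]_n) : prime p ->
  ((\rank (imx 'F_p A)).+2 <= n)%N -> ((p%:Z) ^+ 2 %| \det A)%Z.
Proof.
move: n A; case=> [|[|n]] A hp hr //.
set Ab := imx 'F_p A.
have hE := mulmx_ebase Ab.
set L := col_ebase Ab in hE. set U := row_ebase Ab in hE. set r := \rank Ab in hE hr.
have hL : L \in unitmx := col_ebase_unit Ab.
pose Linv := invmx L.
pose Li : 'M[int]_n.+2 := \matrix_(i, j) ((nat_of_ord (Linv i j))%:Z).
have hLi : imx 'F_p Li = Linv.
  by apply/matrixP => i j; rewrite !mxE -[_%:~R]/(_%:R) natr_Zp.
pose X := Li *m A.
have hX : imx 'F_p X = pid_mx r *m U.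
  by rewrite imxM hLi -/Ab -[X in Linv *m X]hE !mulmxA mulVmx // mul1mx.
have hrow : forall i : 'I_n.+2, (r <= i)%N -> forall j, (p%:Z %| X i j)%Z.
  move=> i hi j; rewrite (dvdz_pcharf (pchar_Fp hp)).
  have := congr1 (fun M : 'M_n.+2 => M i j) hX; rewrite /imx mxE => ->.
  rewrite mxE big1 // => k _; rewrite mxE.
  by rewrite ltnNge hi andbF mul0r.
have hdX : ((p%:Z) ^+ 2 %| \det X)%Z.
  apply: (@two_rows p _ X ord_max (inord n)).
  - by apply/eqP => /(congr1 val); rewrite /= inordK; lia.
  - by apply: hrow; rewrite /=; lia.
  - by apply: hrow; rewrite /= inordK //; lia.
have hLd : ~~ (p%:Z %| \det Li)%Z.
  rewrite (dvdz_pcharf (pchar_Fp hp)) imx_det hLi.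
  by have := unitmx_inv L; rewrite hL unitmxE unitfE.
move: hdX; rewrite /X det_mulmx Gauss_dvdzr //.
rewrite coprimez_pexpl // coprimezE prime_coprime //.
Qed.

Lemma gn_facts n (arc : rel 'I_n) p : in_Gn arc -> prime p -> odd p ->
  ~~ ((p%:Z) ^+ 2 %| \det (walkmx (skewadj arc)))%Z /\ \det (walkmx (skewadj arc)) != 0.
Proof.
case=> m' [hd [ho hsq]] hp hpo; rewrite hd.
have hm0 : m' != 0 by apply: contraTneq ho => ->.
split; last by rewrite mulf_neq0 // expf_neq0.
rewrite Gauss_dvdzr; last first.
  rewrite coprimezXl // coprimezXr // coprimezE /= prime_coprime //.
  by rewrite dvdn_prime2 //; apply: contraTneq hpo => ->.
apply/negP => hdv.
have hdv' : (p ^ 2 %| `|m'|)%N by move: hdv; rewrite /dvdz abszX.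
have hpos : (0 < `|m'|)%N by rewrite absz_gt0.
have hle : (p < `|m'|.+1)%N.
  have hpp : (p %| p ^ 2)%N by rewrite expnS dvdn_mulr.
  by have := dvdn_leq hpos (dvdn_trans hpp hdv'); lia.
have := (forallP hsq) (Ordinal hle); rewrite /= hp /= hdv'.
by [].
Qed.

Lemma skew_tr n (arc : rel 'I_n) : (skewadj arc)^T = - skewadj arc.
Proof. by apply/matrixP => i j; rewrite !mxE opprB. Qed.

Lemma imx0 (R : nzRingType) n m : imx R (0 : 'M[int]_(n, m)) = 0.
Proof. by apply/matrixP => i j; rewrite !mxE. Qed.

Lemma imx_eq0 (p : nat) n m (A : 'M[int]_(n, m)) : prime p ->
  (forall i j, (p%:Z %| A i j)%Z) -> imx 'F_p A = 0.
Proof.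
move=> hp h; apply/matrixP => i j; rewrite !mxE; apply/eqP.
by rewrite -(dvdz_pcharf (pchar_Fp hp)).
Qed.

Theorem lemma3p9 (n : nat) (arc : rel 'I_n) (Q0 : 'M[rat]_n) (l0 p : nat)
  (z : 'cV[int]_n) :
  oriented_graph arc ->
  in_Gn arc ->
  orthogonal_mx Q0 -> regular_mx Q0 ->
  Q0^T *m ratmx (skewadj arc) *m Q0 = ratmx (- skewadj arc) ->
  is_level Q0 l0 ->
  prime p -> odd p -> ~~ (p %| l0)%N ->
  (exists i, ~~ (p%:Z %| z i ord0)%Z) ->
  (forall k, (p%:Z %| ((walkmx (skewadj arc))^T *m z) k ord0)%Z) ->
  ~~ (p%:Z %| (z^T *m z) ord0 ord0)%Z.
Proof.
case: n arc Q0 z => [|m] arc Q0 z; first by move=> _ _ _ _ _ _ _ _ _ [[]].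
move=> _ hG hort hreg hsk hlev hp hodd hpl hz hWz.
set Sz := skewadj arc in hsk hWz *.
set Wz := walkmx Sz in hWz *.
have [hndv hdet0] := gn_facts hG hp hodd.
have hchar := pchar_Fp hp.
case: hlev => hl0 [hint _].
pose Qi : 'M[int]_m.+1 := \matrix_(i, j) Num.floor ((l0%:R *: Q0) i j).
have hQi : ratmx Qi = l0%:R *: Q0.
  apply/matrixP => i j; rewrite mxE [Qi i j]mxE.
  by apply: floorK; apply: hint.
have hlF : (l0%:R : 'F_p) != 0 by rewrite -(dvdn_pcharf hchar).
have h2F : (2 : 'F_p) != 0.
  rewrite -(dvdn_pcharf hchar) dvdn_prime2 //.
  by apply: contraTneq hodd => ->.
have [h1 h3] := rat_facts hort hreg hsk.
set W' := wmx (ratmx Sz) (onev rat m.+1) in h3.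
have hW' : ratmx Wz = W' by apply: imx_wmx.
have hU : W' \in unitmx.
  by rewrite unitmxE unitfE -hW' -imx_det intr_eq0.
have hQtW : Q0^T *m W' = W' *m Dm rat m.+1.
  have : Q0^T *m (Q0 *m W') = W' by rewrite mulmxA hort mul1mx.
  rewrite h3 mulmxA => h.
  by rewrite -[in RHS]h -!mulmxA Dm2 mulmx1.
have hb : W'^T *m Q0 = Dm rat m.+1 *m W'^T.
  by have := congr1 trmx hQtW; rewrite !trmx_mul trmxK Dm_tr.
have ha : \adj W' *m Q0 = Dm rat m.+1 *m \adj W'.
  apply: (can_inj (mulmxK hU)) => /=.
  rewrite -mulmxA h3 mulmxA mul_adj_mx -mulmxA mul_adj_mx.
  by rewrite mul_scalar_mx mul_mx_scalar.
have hc : (ratmx Sz)^T *m Q0 = - (Q0 *m (ratmx Sz)^T).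
  rewrite -[(ratmx Sz)^T]imx_tr skew_tr imxN -/(ratmx Sz).
  by rewrite mulNmx mulmxN h1 opprK.
pose Qb := (l0%:R : 'F_p)^-1 *: imx 'F_p Qi.
have ta : imx 'F_p (\adj Wz) *m Qb + Qb *m imx 'F_p 0 = imx 'F_p (Dm int m.+1 *m \adj Wz).
  apply: transfer hQi hlF _.
  change (imx rat (\adj Wz) *m Q0 + Q0 *m imx rat 0 = imx rat (Dm int m.+1 *m \adj Wz)).
  by rewrite imx0 mulmx0 addr0 imxM imx_Dm !imx_adj -[imx _ Wz]/(ratmx Wz) hW'.
have tb : imx 'F_p Wz^T *m Qb + Qb *m imx 'F_p 0 = imx 'F_p (Dm int m.+1 *m Wz^T).
  apply: transfer hQi hlF _.
  change (imx rat Wz^T *m Q0 + Q0 *m imx rat 0 = imx rat (Dm int m.+1 *m Wz^T)).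
  by rewrite imx0 mulmx0 addr0 imxM imx_Dm !imx_tr -[imx _ Wz]/(ratmx Wz) hW'.
have tc : imx 'F_p Sz^T *m Qb + Qb *m imx 'F_p Sz^T = imx 'F_p 0.
  apply: transfer hQi hlF _.
  change (imx rat Sz^T *m Q0 + Q0 *m imx rat Sz^T = imx rat 0).
  by rewrite imx0 !imx_tr -/(ratmx Sz) hc addNr.
rewrite imx0 mulmx0 addr0 in ta tb.
rewrite imx0 in tc.
apply/negP => hzz.
pose zb := imx 'F_p z.
have hWb : imx 'F_p Wz = wmx (imx 'F_p Sz) (onev 'F_p m.+1) by apply: imx_wmx.
apply: (@core 'F_p m (imx 'F_p Sz) Qb (onev 'F_p m.+1) zb).
- by rewrite -imx_tr skew_tr imxN.
- exact: h2F.
- rewrite -hWb leqNgt; apply/negP => hlt.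
  by move: hndv; rewrite p2_det.
- case: hz => i hi; apply/eqP => /matrixP /(_ i ord0); rewrite !mxE => /eqP.
  by rewrite -(dvdz_pcharf hchar) (negbTE hi).
- rewrite -hWb -imx_tr -imxM.
  have -> : z^T *m Wz = (Wz^T *m z)^T by rewrite trmx_mul trmxK.
  rewrite imx_tr imx_eq0 ?trmx0 // => i j.
  by rewrite ord1; apply: hWz.
- rewrite -imx_tr -imxM imx_eq0 // => i j.
  by rewrite !ord1.
- by rewrite -hWb -imx_adj ta imxM imx_Dm imx_adj.
- by move: tb; rewrite addr0 -hWb -imx_tr => ->; rewrite imxM imx_Dm imx_tr.
- by rewrite -imx_tr; apply/eqP; rewrite -subr_eq0 opprK tc.
Qed.
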